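(* Let $\mathcal{C}$ be a monoidal category, $\mathcal{K}$ a bicategory with (at least) two objects $0$ and $1$ such that $\mathcal{K}(0,0)=\mathcal{K}(1,1)=\mathcal{C}$, and let $\mathcal{F},\mathcal{G}:Del(\mathcal{C})\to\mathcal{K}$ be pseudofunctors with $\mathcal{F}( * )=0$, $\mathcal{G}( * )=1$ and $\mathcal{F}_{*,*}=\mathcal{G}_{*,*}=\mathrm{Id}_\mathcal{C}$. Let $\mathcal{M}=\mathcal{K}(0,1)$, a $(\mathcal{C},\mathcal{C})$-bimodule category via horizontal composition. Then there are canonical isomorphisms of categories $\mathcal{Z}^l_\mathcal{C}(\mathcal{M})\cong\mathrm{Pseudo}(\mathcal{F},\mathcal{G})\cong\mathcal{Z}^r_\mathcal{C}(\mathcal{M})$.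
   Context: $Del(\mathcal{C})$ is the one-object bicategory (object $*$) with hom-category $\mathcal{C}$ and horizontal composition $\otimes$ (composite $g\circ f$ corresponds to $g\otimes f$). The actions on $\mathcal{M}$ are $c\rhd m=c\circ m$, $m\lhd d=m\circ d$. $\mathcal{Z}^l_\mathcal{C}(\mathcal{M})$ is the category of pairs $(M,\sigma)$, $M\in\mathcal{M}$, $\sigma_X:M\lhd X\to X\rhd M$ a natural isomorphism ($X\in\mathcal{C}$) with $(\mathrm{id}_Y\rhd\sigma_X)(\sigma_Y\lhd\mathrm{id}_X)=\sigma_{Y\otimes X}$ and $\sigma_I=\mathrm{id}_M$ (up to coherence), with morphisms $f$ satisfying $(\mathrm{id}_X\rhd f)\sigma_X=\tau_X(f\lhd\mathrm{id}_X)$; $\mathcal{Z}^r_\mathcal{C}(\mathcal{M})$ is defined analogously with natural isomorphisms $\tilde\sigma_X:X\rhd M\to M\lhd X$ satisfying $(\tilde\sigma_Y\lhd\mathrm{id}_X)(\mathrm{id}_Y\rhd\tilde\sigma_X)=\tilde\sigma_{Y\otimes X}$, $\tilde\sigma_I=\mathrm{id}$, and morphisms with $(f\lhd\mathrm{id})\tilde\sigma_X=\tilde\tau_X(\mathrm{id}\rhd f)$. $\mathrm{Pseudo}(\mathcal{F},\mathcal{G})$ is the category of pseudonatural transformations $\mathcal{F}\Rightarrow\mathcal{G}$ (1-cell component $\chi_*$ and invertible 2-cells $\chi_f:\chi_*\circ\mathcal{F}(f)\Rightarrow\mathcal{G}(f)\circ\chi_*$ natural in $f$ and compatible with the composition and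 unit constraints of $\mathcal{F},\mathcal{G}$) and their modifications. *)

(* Defs.v *)
(* Morphism equality is Leibniz equality; proof irrelevance and
   functional extensionality are used for sigma-typed hom-sets. *)
From Stdlib Require Import ProofIrrelevance FunctionalExtensionality.

Record Category := {
  ob :> Type;
  hom : ob -> ob -> Type;
  idm : forall a, hom a a;
  cmp : forall a b c, hom b c -> hom a b -> hom a c;
  cmp_assoc : forall a b c d (h : hom c d) (g : hom b c) (f : hom a b),
      cmp a c d h (cmp a b c g f) = cmp a b d (cmp b c d h g) f;
  cmp_idl : forall a b (f : hom a b), cmp a b b (idm b) f = f;
  cmp_idr : forall a b (f : hom a b), cmp a a b f (idm a) = f }.

Arguments hom {_} _ _.
Arguments idm {_} _.
Arguments cmp {_ _ _ _} _ _.
Arguments cmp_assoc {_ _ _ _ _} _ _ _.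
Arguments cmp_idl {_ _ _} _.
Arguments cmp_idr {_ _ _} _.

Notation "g ∘ f" := (cmp g f) (at level 40, left associativity).

Definition is_iso {C : Category} {a b : ob C} (f : hom a b) : Prop :=
  exists g : hom b a, g ∘ f = idm a /\ f ∘ g = idm b.

Record Functor (C D : Category) := {
  fob : ob C -> ob D;
  fmor : forall a b, @hom C a b -> @hom D (fob a) (fob b);
  fmor_id : forall a, fmor a a (idm a) = idm (fob a);
  fmor_cmp : forall a b c (g : hom b c) (f : hom a b),
      fmor a c (g ∘ f) = fmor b c g ∘ fmor a b f }.

Arguments fob {C D} _ _.
Arguments fmor {C D} _ {a b} _.

Definition IdFunctor (C : Category) : Functor C C.
Proof.
  refine {| fob := fun a => a; fmor := fun a b f => f |}; reflexivity.
Defined.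

Definition CompFunctor {A B C : Category} (G : Functor B C) (F : Functor A B)
  : Functor A C.
Proof.
  refine {| fob := fun a => fob G (fob F a);
            fmor := fun a b f => fmor G (fmor F f) |}.
  - intros; rewrite !fmor_id; reflexivity.
  - intros; rewrite !fmor_cmp; reflexivity.
Defined.

Definition CatIso (A B : Category) : Prop :=
  exists (Phi : Functor A B) (Psi : Functor B A),
    CompFunctor Psi Phi = IdFunctor A /\ CompFunctor Phi Psi = IdFunctor B.

Record MonoidalCategory := {
  mC : Category;
  tens : ob mC -> ob mC -> ob mC;
  tens2 : forall a a' b b', hom a a' -> hom b b' -> hom (tens a b) (tens a' b');
  tens2_id : forall a b, tens2 a a b b (idm a) (idm b) = idm (tens a b);
  tens2_cmp : forall a a' a'' b b' b'' (g : hom a' a'') (f : hom a a')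
      (k : hom b' b'') (h : hom b b'),
      tens2 a a'' b b'' (g ∘ f) (k ∘ h) = tens2 a' a'' b' b'' g k ∘ tens2 a a' b b' f h;
  munit : ob mC;
  masc : forall a b c, hom (tens (tens a b) c) (tens a (tens b c));
  masci : forall a b c, hom (tens a (tens b c)) (tens (tens a b) c);
  masc_inv1 : forall a b c, masci a b c ∘ masc a b c = idm _;
  masc_inv2 : forall a b c, masc a b c ∘ masci a b c = idm _;
  masc_nat : forall a a' b b' c c' (f : hom a a') (g : hom b b') (h : hom c c'),
      masc a' b' c' ∘ tens2 _ _ _ _ (tens2 _ _ _ _ f g) h
      = tens2 _ _ _ _ f (tens2 _ _ _ _ g h) ∘ masc a b c;
  mlu : forall a, hom (tens munit a) a;
  mlui : forall a, hom a (tens munit a);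
  mlu_inv1 : forall a, mlui a ∘ mlu a = idm _;
  mlu_inv2 : forall a, mlu a ∘ mlui a = idm _;
  mlu_nat : forall a a' (f : hom a a'),
      mlu a' ∘ tens2 _ _ _ _ (idm munit) f = f ∘ mlu a;
  mru : forall a, hom (tens a munit) a;
  mrui : forall a, hom a (tens a munit);
  mru_inv1 : forall a, mrui a ∘ mru a = idm _;
  mru_inv2 : forall a, mru a ∘ mrui a = idm _;
  mru_nat : forall a a' (f : hom a a'),
      mru a' ∘ tens2 _ _ _ _ f (idm munit) = f ∘ mru a;
  mpentagon : forall a b c d,
      masc a b (tens c d) ∘ masc (tens a b) c d
      = tens2 _ _ _ _ (idm a) (masc b c d) ∘ masc a (tens b c) d
        ∘ tens2 _ _ _ _ (masc a b c) (idm d);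
  mtriangle : forall a b,
      tens2 _ _ _ _ (idm a) (mlu b) ∘ masc a munit b = tens2 _ _ _ _ (mru a) (idm b) }.

Arguments tens2 _ {_ _ _ _} _ _.

Record Bicategory := {
  B0 : Type;
  B1 : B0 -> B0 -> Category;
  bid : forall x, ob (B1 x x);
  hc : forall x y z, ob (B1 y z) -> ob (B1 x y) -> ob (B1 x z);
  hc2 : forall x y z (g g' : B1 y z) (f f' : B1 x y),
      hom g g' -> hom f f' -> hom (hc x y z g f) (hc x y z g' f');
  hc2_id : forall x y z (g : B1 y z) (f : B1 x y),
      hc2 x y z g g f f (idm g) (idm f) = idm (hc x y z g f);
  hc2_cmp : forall x y z (g g' g'' : B1 y z) (f f' f'' : B1 x y)
      (b : hom g' g'') (a : hom g g') (d : hom f' f'') (c : hom f f'),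
      hc2 _ _ _ _ _ _ _ (b ∘ a) (d ∘ c)
      = hc2 _ _ _ _ _ _ _ b d ∘ hc2 _ _ _ _ _ _ _ a c;
  asc : forall x y z w (h : B1 z w) (g : B1 y z) (f : B1 x y),
      hom (hc _ _ _ (hc _ _ _ h g) f) (hc _ _ _ h (hc _ _ _ g f));
  asci : forall x y z w (h : B1 z w) (g : B1 y z) (f : B1 x y),
      hom (hc _ _ _ h (hc _ _ _ g f)) (hc _ _ _ (hc _ _ _ h g) f);
  asc_inv1 : forall x y z w h g f, asci x y z w h g f ∘ asc x y z w h g f = idm _;
  asc_inv2 : forall x y z w h g f, asc x y z w h g f ∘ asci x y z w h g f = idm _;
  asc_nat : forall x y z w (h h' : B1 z w) (g g' : B1 y z) (f f' : B1 x y)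
      (c : hom h h') (b : hom g g') (a : hom f f'),
      asc _ _ _ _ h' g' f' ∘ hc2 _ _ _ _ _ _ _ (hc2 _ _ _ _ _ _ _ c b) a
      = hc2 _ _ _ _ _ _ _ c (hc2 _ _ _ _ _ _ _ b a) ∘ asc _ _ _ _ h g f;
  lu : forall x y (f : B1 x y), hom (hc _ _ _ (bid y) f) f;
  lui : forall x y (f : B1 x y), hom f (hc _ _ _ (bid y) f);
  lu_inv1 : forall x y f, lui x y f ∘ lu x y f = idm _;
  lu_inv2 : forall x y f, lu x y f ∘ lui x y f = idm _;
  lu_nat : forall x y (f f' : B1 x y) (a : hom f f'),
      lu _ _ f' ∘ hc2 _ _ _ _ _ _ _ (idm (bid y)) a = a ∘ lu _ _ f;
  ru : forall x y (f : B1 x y), hom (hc _ _ _ f (bid x)) f;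
  rui : forall x y (f : B1 x y), hom f (hc _ _ _ f (bid x));
  ru_inv1 : forall x y f, rui x y f ∘ ru x y f = idm _;
  ru_inv2 : forall x y f, ru x y f ∘ rui x y f = idm _;
  ru_nat : forall x y (f f' : B1 x y) (a : hom f f'),
      ru _ _ f' ∘ hc2 _ _ _ _ _ _ _ a (idm (bid x)) = a ∘ ru _ _ f;
  pentagon : forall v x y z w (k : B1 z w) (h : B1 y z) (g : B1 x y) (f : B1 v x),
      asc _ _ _ _ k h (hc _ _ _ g f) ∘ asc _ _ _ _ (hc _ _ _ k h) g f
      = hc2 _ _ _ _ _ _ _ (idm k) (asc _ _ _ _ h g f) ∘ asc _ _ _ _ k (hc _ _ _ h g) f
        ∘ hc2 _ _ _ _ _ _ _ (asc _ _ _ _ k h g) (idm f);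
  triangle : forall x y z (g : B1 y z) (f : B1 x y),
      hc2 _ _ _ _ _ _ _ (idm g) (lu _ _ f) ∘ asc _ _ _ _ g (bid y) f
      = hc2 _ _ _ _ _ _ _ (ru _ _ g) (idm f) }.

Arguments hc _ {_ _ _} _ _.
Arguments hc2 _ {_ _ _ _ _ _ _} _ _.
Arguments asc _ {_ _ _ _} _ _ _.
Arguments asci _ {_ _ _ _} _ _ _.
Arguments lu _ {_ _} _.
Arguments lui _ {_ _} _.
Arguments ru _ {_ _} _.
Arguments rui _ {_ _} _.

Definition Del (C : MonoidalCategory) : Bicategory.
Proof.
  refine {| B0 := unit; B1 := fun _ _ => mC C; bid := fun _ => munit C;
            hc := fun _ _ _ g f => tens C g f;
            hc2 := fun _ _ _ _ _ _ _ b a => tens2 C b a;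
            asc := fun _ _ _ _ h g f => masc C h g f;
            asci := fun _ _ _ _ h g f => masci C h g f;
            lu := fun _ _ f => mlu C f; lui := fun _ _ f => mlui C f;
            ru := fun _ _ f => mru C f; rui := fun _ _ f => mrui C f |}.
  all: intros; first [ apply tens2_id | apply tens2_cmp | apply masc_inv1
    | apply masc_inv2 | apply masc_nat | apply mlu_inv1 | apply mlu_inv2
    | apply mlu_nat | apply mru_inv1 | apply mru_inv2 | apply mru_nat
    | apply mpentagon | apply mtriangle ].
Defined.

Definition End (K : Bicategory) (x : B0 K) : MonoidalCategory.
Proof.
  refine {| mC := B1 K x x; tens := fun g f => hc K g f;
            tens2 := fun _ _ _ _ b a => hc2 K b a; munit := bid K x;
            masc := fun h g f => asc K h g f; masci := fun h g f => asci K h g f;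
            mlu := fun f => lu K f; mlui := fun f => lui K f;
            mru := fun f => ru K f; mrui := fun f => rui K f |}.
  all: intros; first [ apply hc2_id | apply hc2_cmp | apply asc_inv1
    | apply asc_inv2 | apply asc_nat | apply lu_inv1 | apply lu_inv2
    | apply lu_nat | apply ru_inv1 | apply ru_inv2 | apply ru_nat
    | apply pentagon | apply triangle ].
Defined.

Record Pseudofunctor (B K : Bicategory) := {
  pob : B0 B -> B0 K;
  pfun : forall x y, Functor (B1 B x y) (B1 K (pob x) (pob y));
  pc : forall x y z (g : B1 B y z) (f : B1 B x y),
      hom (hc K (fob (pfun y z) g) (fob (pfun x y) f)) (fob (pfun x z) (hc B g f));
  pc_iso : forall x y z g f, is_iso (pc x y z g f);
  pc_nat : forall x y z (g g' : B1 B y z) (f f' : B1 B x y) (b : hom g g') (a : hom f f'),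
      pc x y z g' f' ∘ hc2 K (fmor (pfun y z) b) (fmor (pfun x y) a)
      = fmor (pfun x z) (hc2 B b a) ∘ pc x y z g f;
  pu : forall x, hom (bid K (pob x)) (fob (pfun x x) (bid B x));
  pu_iso : forall x, is_iso (pu x);
  p_assoc : forall x y z w (h : B1 B z w) (g : B1 B y z) (f : B1 B x y),
      fmor (pfun x w) (asc B h g f) ∘ pc x y w (hc B h g) f
        ∘ hc2 K (pc y z w h g) (idm (fob (pfun x y) f))
      = pc x z w h (hc B g f) ∘ hc2 K (idm (fob (pfun z w) h)) (pc x y z g f)
        ∘ asc K (fob (pfun z w) h) (fob (pfun y z) g) (fob (pfun x y) f);
  p_lunit : forall x y (f : B1 B x y),
      fmor (pfun x y) (lu B f) ∘ pc x y y (bid B y) f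
        ∘ hc2 K (pu y) (idm (fob (pfun x y) f))
      = lu K (fob (pfun x y) f);
  p_runit : forall x y (f : B1 B x y),
      fmor (pfun x y) (ru B f) ∘ pc x x y f (bid B x)
        ∘ hc2 K (idm (fob (pfun x y) f)) (pu x)
      = ru K (fob (pfun x y) f) }.

Arguments pob {B K} _ _.
Arguments pfun {B K} _ _ _.
Arguments pc {B K} _ {_ _ _} _ _.
Arguments pu {B K} _ _.

Definition pf {B K} (P : Pseudofunctor B K) {x y} (f : B1 B x y) : B1 K (pob P x) (pob P y)
  := fob (pfun P x y) f.
Definition pm {B K} (P : Pseudofunctor B K) {x y} {f f' : B1 B x y} (a : hom f f')
  : hom (pf P f) (pf P f') := fmor (pfun P x y) a.

Record PseudoNat {B K} (P Q : Pseudofunctor B K) := {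
  tc : forall x, B1 K (pob P x) (pob Q x);
  tn : forall x y (f : B1 B x y), hom (hc K (tc y) (pf P f)) (hc K (pf Q f) (tc x));
  tn_iso : forall x y f, is_iso (tn x y f);
  tn_nat : forall x y (f f' : B1 B x y) (a : hom f f'),
      tn x y f' ∘ hc2 K (idm (tc y)) (pm P a) = hc2 K (pm Q a) (idm (tc x)) ∘ tn x y f;
  tn_comp : forall x y z (g : B1 B y z) (f : B1 B x y),
      tn x z (hc B g f) ∘ hc2 K (idm (tc z)) (pc P g f)
      = hc2 K (pc Q g f) (idm (tc x)) ∘ asci K (pf Q g) (pf Q f) (tc x)
        ∘ hc2 K (idm (pf Q g)) (tn x y f) ∘ asc K (pf Q g) (tc y) (pf P f)
        ∘ hc2 K (tn y z g) (idm (pf P f)) ∘ asci K (tc z) (pf P g) (pf P f);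
  tn_unit : forall x,
      tn x x (bid B x) ∘ hc2 K (idm (tc x)) (pu P x)
      = hc2 K (pu Q x) (idm (tc x)) ∘ lui K (tc x) ∘ ru K (tc x) }.

Arguments tc {B K P Q} _ _.
Arguments tn {B K P Q} _ {_ _} _.

Definition is_modif {B K} {P Q : Pseudofunctor B K} (χ ψ : PseudoNat P Q)
  (m : forall x, hom (tc χ x) (tc ψ x)) : Prop :=
  forall x y (f : B1 B x y),
    tn ψ f ∘ hc2 K (m y) (idm (pf P f)) = hc2 K (idm (pf Q f)) (m x) ∘ tn χ f.

Lemma sig_eq {A : Type} {P : A -> Prop} (u v : {a | P a}) :
  proj1_sig u = proj1_sig v -> u = v.
Proof.
  destruct u as [a p], v as [b q]; simpl; intros ->; f_equal; apply proof_irrelevance.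
Qed.

Lemma hc2_cmp_l (K : Bicategory) x y z (g g' g'' : B1 K y z) (f : B1 K x y)
  (b : hom g' g'') (a : hom g g') :
  hc2 K (b ∘ a) (idm f) = hc2 K b (idm f) ∘ hc2 K a (idm f).
Proof. rewrite <- hc2_cmp, cmp_idl; reflexivity. Qed.

Lemma hc2_cmp_r (K : Bicategory) x y z (g : B1 K y z) (f f' f'' : B1 K x y)
  (b : hom f' f'') (a : hom f f') :
  hc2 K (idm g) (b ∘ a) = hc2 K (idm g) b ∘ hc2 K (idm g) a.
Proof. rewrite <- hc2_cmp, cmp_idl; reflexivity. Qed.

Lemma modif_id {B K} {P Q : Pseudofunctor B K} (χ : PseudoNat P Q) :
  is_modif χ χ (fun x => idm (tc χ x)).
Proof. intros x y f. rewrite !hc2_id, cmp_idl, cmp_idr; reflexivity. Qed.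

Lemma modif_cmp {B K} {P Q : Pseudofunctor B K} (χ ψ ρ : PseudoNat P Q)
  (n : forall x, hom (tc ψ x) (tc ρ x)) (m : forall x, hom (tc χ x) (tc ψ x)) :
  is_modif ψ ρ n -> is_modif χ ψ m -> is_modif χ ρ (fun x => n x ∘ m x).
Proof.
  intros Hn Hm x y f.
  rewrite hc2_cmp_l, hc2_cmp_r, cmp_assoc, Hn, <- cmp_assoc, Hm, cmp_assoc.
  reflexivity.
Qed.

Definition Pseudo {B K} (P Q : Pseudofunctor B K) : Category.
Proof.
  refine {| ob := PseudoNat P Q;
            hom := fun χ ψ => { m : forall x, hom (tc χ x) (tc ψ x) | is_modif χ ψ m };
            idm := fun χ => exist _ (fun x => idm (tc χ x)) (modif_id χ);
            cmp := fun χ ψ ρ n m =>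
                     exist _ (fun x => proj1_sig n x ∘ proj1_sig m x)
                       (modif_cmp χ ψ ρ _ _ (proj2_sig n) (proj2_sig m)) |}.
  - intros; apply sig_eq; simpl; apply functional_extensionality_dep; intro;
      apply cmp_assoc.
  - intros; apply sig_eq; simpl; apply functional_extensionality_dep; intro;
      apply cmp_idl.
  - intros; apply sig_eq; simpl; apply functional_extensionality_dep; intro;
      apply cmp_idr.
Defined.

Record BimodData (L R : MonoidalCategory) := {
  bm : Category;
  lact : ob (mC L) -> ob bm -> ob bm;
  lact2 : forall c c' m m', hom c c' -> hom m m' -> hom (lact c m) (lact c' m');
  lact2_id : forall c m, lact2 c c m m (idm c) (idm m) = idm (lact c m);
  lact2_cmp : forall c c' c'' m m' m'' (g : hom c' c'') (f : hom c c')
      (k : hom m' m'') (h : hom m m'),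
      lact2 _ _ _ _ (g ∘ f) (k ∘ h) = lact2 _ _ _ _ g k ∘ lact2 _ _ _ _ f h;
  ract : ob bm -> ob (mC R) -> ob bm;
  ract2 : forall m m' d d', hom m m' -> hom d d' -> hom (ract m d) (ract m' d');
  ract2_id : forall m d, ract2 m m d d (idm m) (idm d) = idm (ract m d);
  ract2_cmp : forall m m' m'' d d' d'' (g : hom m' m'') (f : hom m m')
      (k : hom d' d'') (h : hom d d'),
      ract2 _ _ _ _ (g ∘ f) (k ∘ h) = ract2 _ _ _ _ g k ∘ ract2 _ _ _ _ f h;
  l_as : forall c c' m, hom (lact (tens L c c') m) (lact c (lact c' m));
  l_asi : forall c c' m, hom (lact c (lact c' m)) (lact (tens L c c') m);
  r_as : forall m d d', hom (ract m (tens R d d')) (ract (ract m d) d');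
  r_asi : forall m d d', hom (ract (ract m d) d') (ract m (tens R d d'));
  mid : forall c m d, hom (ract (lact c m) d) (lact c (ract m d));
  midi : forall c m d, hom (lact c (ract m d)) (ract (lact c m) d);
  l_un : forall m, hom (lact (munit L) m) m;
  l_uni : forall m, hom m (lact (munit L) m);
  r_un : forall m, hom (ract m (munit R)) m;
  r_uni : forall m, hom m (ract m (munit R)) }.

Arguments bm {L R} _.
Arguments lact {L R} _ _ _.
Arguments lact2 {L R} _ {_ _ _ _} _ _.
Arguments ract {L R} _ _ _.
Arguments ract2 {L R} _ {_ _ _ _} _ _.
Arguments l_as {L R} _ _ _ _.
Arguments l_asi {L R} _ _ _ _.
Arguments r_as {L R} _ _ _ _.
Arguments r_asi {L R} _ _ _ _.
Arguments mid {L R} _ _ _ _.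
Arguments midi {L R} _ _ _ _.
Arguments l_un {L R} _ _.
Arguments l_uni {L R} _ _.
Arguments r_un {L R} _ _.
Arguments r_uni {L R} _ _.

Definition bimodK (K : Bicategory) (x y : B0 K) : BimodData (End K y) (End K x).
Proof.
  refine (@Build_BimodData (End K y) (End K x) (B1 K x y)
            (fun c m => hc K c m) (fun _ _ _ _ a b => hc2 K a b) _ _
            (fun m d => hc K m d) (fun _ _ _ _ a b => hc2 K a b) _ _
            (fun c c' m => asc K c c' m) (fun c c' m => asci K c c' m)
            (fun m d d' => asci K m d d') (fun m d d' => asc K m d d')
            (fun c m d => asc K c m d) (fun c m d => asci K c m d)
            (fun m => lu K m) (fun m => lui K m)
            (fun m => ru K m) (fun m => rui K m)).
  all: intros; first [apply hc2_id | apply hc2_cmp].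
Defined.

Record ZLob (C : MonoidalCategory) (D : BimodData C C) := {
  zl_m : ob (bm D);
  zl_s : forall X : ob (mC C), hom (ract D zl_m X) (lact D X zl_m);
  zl_iso : forall X, is_iso (zl_s X);
  zl_nat : forall X X' (f : hom X X'),
      lact2 D f (idm zl_m) ∘ zl_s X = zl_s X' ∘ ract2 D (idm zl_m) f;
  zl_tens : forall X Y,
      zl_s (tens C Y X)
      = l_asi D Y X zl_m ∘ lact2 D (idm Y) (zl_s X) ∘ mid D Y zl_m X
        ∘ ract2 D (zl_s Y) (idm X) ∘ r_as D zl_m Y X;
  zl_unit : zl_s (munit C) = l_uni D zl_m ∘ r_un D zl_m }.

Arguments zl_m {C D} _.
Arguments zl_s {C D} _ _.

Record ZRob (C : MonoidalCategory) (D : BimodData C C) := {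
  zr_m : ob (bm D);
  zr_s : forall X : ob (mC C), hom (lact D X zr_m) (ract D zr_m X);
  zr_iso : forall X, is_iso (zr_s X);
  zr_nat : forall X X' (f : hom X X'),
      ract2 D (idm zr_m) f ∘ zr_s X = zr_s X' ∘ lact2 D f (idm zr_m);
  zr_tens : forall X Y,
      zr_s (tens C Y X)
      = r_asi D zr_m Y X ∘ ract2 D (zr_s Y) (idm X) ∘ midi D Y zr_m X
        ∘ lact2 D (idm Y) (zr_s X) ∘ l_as D Y X zr_m;
  zr_unit : zr_s (munit C) = r_uni D zr_m ∘ l_un D zr_m }.

Arguments zr_m {C D} _.
Arguments zr_s {C D} _ _.

Definition is_zl_mor {C D} (s t : ZLob C D) (f : hom (zl_m s) (zl_m t)) : Prop :=
  forall X, lact2 D (idm X) f ∘ zl_s s X = zl_s t X ∘ ract2 D f (idm X).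

Definition is_zr_mor {C D} (s t : ZRob C D) (f : hom (zr_m s) (zr_m t)) : Prop :=
  forall X, ract2 D f (idm X) ∘ zr_s s X = zr_s t X ∘ lact2 D (idm X) f.

Lemma lact2_cmp_r {L R} (D : BimodData L R) c m m' m'' (g : hom m' m'') (f : hom m m') :
  lact2 D (idm c) (g ∘ f) = lact2 D (idm c) g ∘ lact2 D (idm c) f.
Proof. rewrite <- lact2_cmp, cmp_idl; reflexivity. Qed.
Lemma lact2_cmp_l {L R} (D : BimodData L R) c c' c'' m (g : hom c' c'') (f : hom c c') :
  lact2 D (g ∘ f) (idm m) = lact2 D g (idm m) ∘ lact2 D f (idm m).
Proof. rewrite <- lact2_cmp, cmp_idl; reflexivity. Qed.
Lemma ract2_cmp_r {L R} (D : BimodData L R) d m m' m'' (g : hom m' m'') (f : hom m m') :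
  ract2 D (g ∘ f) (idm d) = ract2 D g (idm d) ∘ ract2 D f (idm d).
Proof. rewrite <- ract2_cmp, cmp_idl; reflexivity. Qed.

Lemma zl_mor_id {C D} (s : ZLob C D) : is_zl_mor s s (idm (zl_m s)).
Proof. intro X. rewrite lact2_id, ract2_id, cmp_idl, cmp_idr; reflexivity. Qed.

Lemma zl_mor_cmp {C D} (s t u : ZLob C D) g f :
  is_zl_mor t u g -> is_zl_mor s t f -> is_zl_mor s u (g ∘ f).
Proof.
  intros Hg Hf X. rewrite lact2_cmp_r, ract2_cmp_r.
  rewrite <- cmp_assoc, Hf, cmp_assoc, Hg, <- cmp_assoc; reflexivity.
Qed.

Lemma zr_mor_id {C D} (s : ZRob C D) : is_zr_mor s s (idm (zr_m s)).
Proof. intro X. rewrite lact2_id, ract2_id, cmp_idl, cmp_idr; reflexivity. Qed.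

Lemma zr_mor_cmp {C D} (s t u : ZRob C D) g f :
  is_zr_mor t u g -> is_zr_mor s t f -> is_zr_mor s u (g ∘ f).
Proof.
  intros Hg Hf X. rewrite lact2_cmp_r, ract2_cmp_r.
  rewrite <- cmp_assoc, Hf, cmp_assoc, Hg, <- cmp_assoc; reflexivity.
Qed.

Definition ZL (C : MonoidalCategory) (D : BimodData C C) : Category.
Proof.
  refine {| ob := ZLob C D;
            hom := fun s t => { f : hom (zl_m s) (zl_m t) | is_zl_mor s t f };
            idm := fun s => exist _ (idm (zl_m s)) (zl_mor_id s);
            cmp := fun s t u g f => exist _ (proj1_sig g ∘ proj1_sig f)
                     (zl_mor_cmp s t u _ _ (proj2_sig g) (proj2_sig f)) |}.
  - intros; apply sig_eq; apply cmp_assoc.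
  - intros; apply sig_eq; apply cmp_idl.
  - intros; apply sig_eq; apply cmp_idr.
Defined.

Definition ZR (C : MonoidalCategory) (D : BimodData C C) : Category.
Proof.
  refine {| ob := ZRob C D;
            hom := fun s t => { f : hom (zr_m s) (zr_m t) | is_zr_mor s t f };
            idm := fun s => exist _ (idm (zr_m s)) (zr_mor_id s);
            cmp := fun s t u g f => exist _ (proj1_sig g ∘ proj1_sig f)
                     (zr_mor_cmp s t u _ _ (proj2_sig g) (proj2_sig f)) |}.
  - intros; apply sig_eq; apply cmp_assoc.
  - intros; apply sig_eq; apply cmp_idl.
  - intros; apply sig_eq; apply cmp_idr.
Defined.

Definition bimodC (K : Bicategory) (o0 o1 : B0 K) (C : MonoidalCategory)
  (e0 : End K o0 = C) (e1 : End K o1 = C) : BimodData C C :=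
  match e1 in _ = D return BimodData D C with
  | eq_refl =>
      match e0 in _ = D return BimodData (End K o1) D with
      | eq_refl => bimodK K o0 o1
      end
  end.

(* A functor between monoidal categories together with its (lax) structure
   morphisms; for a pseudofunctor Del(C) -> K this is F_{pt,pt} with its
   composition constraint F_2 and unit constraint F_0. *)
Record MonFunData (C D : MonoidalCategory) := {
  mf : Functor (mC C) (mC D);
  mf2 : forall a b, hom (tens D (fob mf a) (fob mf b)) (fob mf (tens C a b));
  mf0 : hom (munit D) (fob mf (munit C)) }.

Definition homMonAt {C : MonoidalCategory} {K : Bicategory}
  (F : Pseudofunctor (Del C) K) (o : B0 K) (e : pob F tt = o) : MonFunData C (End K o) :=
  match e in _ = o' return MonFunData C (End K o') with
  | eq_refl =>
      @Build_MonFunData C (End K (pob F tt)) (pfun F tt tt)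
         (fun a b => pc F (x := tt) (y := tt) (z := tt) a b) (pu F tt)
  end.

Definition castIdMon (K : Bicategory) (o : B0 K) (C : MonoidalCategory)
  (e : End K o = C) : MonFunData C (End K o) :=
  match e in _ = D return MonFunData D (End K o) with
  | eq_refl =>
      @Build_MonFunData (End K o) (End K o) (IdFunctor (B1 K o o))
         (fun a b => idm (hc K a b)) (idm (bid K o))
  end.

(* Main.v *)
Require Import Defs.
From Stdlib Require Import ProofIrrelevance FunctionalExtensionality JMeq ClassicalEpsilon.

Definition bimodR (C : MonoidalCategory) (K : Bicategory) (x y : B0 K)
  (P : MonFunData C (End K x))
  (p2i : forall a b, hom (fob (mf _ _ P) (tens C a b)) (hc K (fob (mf _ _ P) a) (fob (mf _ _ P) b)))
  (p0i : hom (fob (mf _ _ P) (munit C)) (bid K x)) : BimodData (End K y) C.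
Proof.
  refine (@Build_BimodData (End K y) C (B1 K x y)
            (fun c m => hc K c m) (fun _ _ _ _ a b => hc2 K a b) _ _
            (fun m d => hc K m (fob (mf _ _ P) d)) (fun _ _ _ _ a b => hc2 K a (fmor (mf _ _ P) b)) _ _
            (fun c c' m => asc K c c' m) (fun c c' m => asci K c c' m)
            (fun m d d' => asci K m _ _ ∘ hc2 K (idm m) (p2i d d'))
            (fun m d d' => hc2 K (idm m) (mf2 _ _ P d d') ∘ asc K m _ _)
            (fun c m d => asc K c m _) (fun c m d => asci K c m _)
            (fun m => lu K m) (fun m => lui K m)
            (fun m => ru K m ∘ hc2 K (idm m) p0i) (fun m => hc2 K (idm m) (mf0 _ _ P) ∘ rui K m)).
  - intros; apply hc2_id.
  - intros; apply hc2_cmp.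
  - intros; simpl; rewrite fmor_id; apply hc2_id.
  - intros; simpl; rewrite fmor_cmp; apply hc2_cmp.
Defined.

Definition bimodL (C R : MonoidalCategory) (K : Bicategory) (y : B0 K)
  (Q : MonFunData C (End K y))
  (q2i : forall a b, hom (fob (mf _ _ Q) (tens C a b)) (hc K (fob (mf _ _ Q) a) (fob (mf _ _ Q) b)))
  (q0i : hom (fob (mf _ _ Q) (munit C)) (bid K y))
  (B : BimodData (End K y) R) : BimodData C R.
Proof.
  refine (@Build_BimodData C R (bm B)
            (fun c m => lact B (fob (mf _ _ Q) c) m) (fun _ _ _ _ a b => lact2 B (fmor (mf _ _ Q) a) b) _ _
            (ract B) (@ract2 _ _ B) (ract2_id _ _ B) (ract2_cmp _ _ B)
            (fun c c' m => l_as B _ _ m ∘ lact2 B (q2i c c') (idm m))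
            (fun c c' m => lact2 B (mf2 _ _ Q c c') (idm m) ∘ l_asi B _ _ m)
            (r_as B) (r_asi B)
            (fun c m d => mid B _ m d) (fun c m d => midi B _ m d)
            (fun m => l_un B m ∘ lact2 B q0i (idm m)) (fun m => lact2 B (mf0 _ _ Q) (idm m) ∘ l_uni B m)
            (r_un B) (r_uni B)).
  - intros; simpl; rewrite fmor_id; apply lact2_id.
  - intros; simpl; rewrite fmor_cmp; apply lact2_cmp.
Defined.

Definition ci2 (K : Bicategory) (o : B0 K) (C : MonoidalCategory) (e : End K o = C) :
  forall a b, hom (fob (mf _ _ (castIdMon K o C e)) (tens C a b))
     (hc K (fob (mf _ _ (castIdMon K o C e)) a) (fob (mf _ _ (castIdMon K o C e)) b)) :=
  match e as e' in _ = D return forall a b, hom (fob (mf _ _ (castIdMon K o D e')) (tens D a b))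
     (hc K (fob (mf _ _ (castIdMon K o D e')) a) (fob (mf _ _ (castIdMon K o D e')) b)) with
  | eq_refl => fun a b => idm _ end.

Definition ci0 (K : Bicategory) (o : B0 K) (C : MonoidalCategory) (e : End K o = C) :
  hom (fob (mf _ _ (castIdMon K o C e)) (munit C)) (bid K o) :=
  match e as e' in _ = D return hom (fob (mf _ _ (castIdMon K o D e')) (munit D)) (bid K o) with
  | eq_refl => idm _ end.

Lemma ci2_l K o C e a b : mf2 _ _ (castIdMon K o C e) a b ∘ ci2 K o C e a b = idm _.
Proof. destruct e; apply cmp_idl. Qed.
Lemma ci2_r K o C e a b : ci2 K o C e a b ∘ mf2 _ _ (castIdMon K o C e) a b = idm _.
Proof. destruct e; apply cmp_idl. Qed.
Lemma ci0_l K o C e : mf0 _ _ (castIdMon K o C e) ∘ ci0 K o C e = idm _.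
Proof. destruct e; apply cmp_idl. Qed.
Lemma ci0_r K o C e : ci0 K o C e ∘ mf0 _ _ (castIdMon K o C e) = idm _.
Proof. destruct e; apply cmp_idl. Qed.

Lemma bimod_eq L R bm0 lact0 lact20 p1 p2 ract0 ract20 p3 p4 q1 q2 q3 q4
  las las' lasi lasi' ras ras' rasi rasi' md md' mdi mdi' lun lun' luni luni' run run' runi runi' :
  las = las' -> lasi = lasi' -> ras = ras' -> rasi = rasi' -> md = md' -> mdi = mdi' ->
  lun = lun' -> luni = luni' -> run = run' -> runi = runi' ->
  @Build_BimodData L R bm0 lact0 lact20 p1 p2 ract0 ract20 p3 p4 las lasi ras rasi md mdi lun luni run runi
  = @Build_BimodData L R bm0 lact0 lact20 q1 q2 ract0 ract20 q3 q4 las' lasi' ras' rasi' md' mdi' lun' luni' run' runi'.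
Proof.
  intros; subst. f_equal; apply proof_irrelevance.
Qed.

Lemma castR K o0 o1 C (e0 : End K o0 = C) :
  match e0 in _ = D return BimodData (End K o1) D with eq_refl => bimodK K o0 o1 end
  = bimodR C K o0 o1 (castIdMon K o0 C e0) (ci2 K o0 C e0) (ci0 K o0 C e0).
Proof.
  destruct e0. unfold bimodK, bimodR. apply bimod_eq; simpl;
  repeat (apply functional_extensionality_dep; intro);
  rewrite ?hc2_id, ?cmp_idl, ?cmp_idr; reflexivity.
Qed.

Lemma castL K o1 C (e1 : End K o1 = C) (B : BimodData (End K o1) C) :
  match e1 in _ = D return BimodData D C with eq_refl => B end
  = bimodL C C K o1 (castIdMon K o1 C e1) (ci2 K o1 C e1) (ci0 K o1 C e1) B.
Proof.
  revert B. destruct e1. intro B. destruct B. unfold bimodL. apply bimod_eq; simpl;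
  repeat (apply functional_extensionality_dep; intro);
  rewrite ?lact2_id, ?cmp_idl, ?cmp_idr; reflexivity.
Qed.

Definition homMon {C K} (F : Pseudofunctor (Del C) K) := homMonAt F (pob F tt) eq_refl.

Definition DD (C : MonoidalCategory) (K : Bicategory) (F G : Pseudofunctor (Del C) K) p2i p0i q2i q0i :=
  bimodL C C K (pob G tt) (homMon G) q2i q0i (bimodR C K (pob F tt) (pob G tt) (homMon F) p2i p0i).


Lemma cancel_r {Cat : Category} {b c d : ob Cat} (p : hom c d) (u : hom b c) (v : hom c b) :
  u ∘ v = idm _ -> p ∘ u ∘ v = p.
Proof. intro H. rewrite <- cmp_assoc, H, cmp_idr. reflexivity. Qed.

Lemma flipA {Cat : Category} {a a' b : ob Cat} (s : hom a b) (A : hom a' a) (Ai : hom a a') (L : hom a' b) :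
  A ∘ Ai = idm _ -> Ai ∘ A = idm _ -> (s ∘ A = L <-> s = L ∘ Ai).
Proof.
  intros H1 H2; split; intro H.
  - rewrite <- H, cancel_r by exact H1. reflexivity.
  - rewrite H, cancel_r by exact H2. reflexivity.
Qed.

Lemma flipB {Cat : Category} {a a' b : ob Cat} (s : hom a b) (r : hom b a) (A : hom a' a) (Ai : hom a a')
  (L : hom a' b) (Li : hom b a') :
  s ∘ r = idm _ -> r ∘ s = idm _ -> A ∘ Ai = idm _ -> Ai ∘ A = idm _ ->
  L ∘ Li = idm _ -> Li ∘ L = idm _ -> (s ∘ A = L <-> r = A ∘ Li).
Proof.
  intros H1 H2 H3 H4 H5 H6; split; intro H.
  - rewrite <- (cancel_r r L Li H5), <- H, !cmp_assoc, H2, cmp_idl. reflexivity.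
  - rewrite <- (cancel_r (s ∘ A) Li L H6), <- (cmp_assoc s A Li), <- H, H1, cmp_idl. reflexivity.
Qed.

Lemma hc2_inv_l (K : Bicategory) x y z (g g' : B1 K y z) (h : B1 K x y) (f : hom g g') (f' : hom g' g) :
  f ∘ f' = idm _ -> hc2 K f (idm h) ∘ hc2 K f' (idm h) = idm _.
Proof. intro H. rewrite <- hc2_cmp_l, H, hc2_id. reflexivity. Qed.
Lemma hc2_inv_r (K : Bicategory) x y z (g : B1 K y z) (h h' : B1 K x y) (f : hom h h') (f' : hom h' h) :
  f ∘ f' = idm _ -> hc2 K (idm g) f ∘ hc2 K (idm g) f' = idm _.
Proof. intro H. rewrite <- hc2_cmp_r, H, hc2_id. reflexivity. Qed.

Definition Lc (K : Bicategory) x0 x1 (m : B1 K x0 x1) (FY FX : B1 K x0 x0) (GY GX GYX : B1 K x1 x1)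
  (pcG : hom (hc K GY GX) GYX) (sX : hom (hc K m FX) (hc K GX m)) (sY : hom (hc K m FY) (hc K GY m)) :=
  hc2 K pcG (idm m) ∘ asci K GY GX m ∘ hc2 K (idm GY) sX ∘ asc K GY m FX ∘ hc2 K sY (idm FX)
  ∘ asci K m FY FX.
Definition Lci (K : Bicategory) x0 x1 (m : B1 K x0 x1) (FY FX : B1 K x0 x0) (GY GX GYX : B1 K x1 x1)
  (q2i : hom GYX (hc K GY GX)) (rX : hom (hc K GX m) (hc K m FX)) (rY : hom (hc K GY m) (hc K m FY)) :=
  asc K m FY FX ∘ hc2 K rY (idm FX) ∘ asci K GY m FX ∘ hc2 K (idm GY) rX ∘ asc K GY GX m
  ∘ hc2 K q2i (idm m).

Lemma Lc_inv1 K x0 x1 m FY FX GY GX GYX pcG q2i sX sY rX rY :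
  pcG ∘ q2i = idm _ -> sX ∘ rX = idm _ -> sY ∘ rY = idm _ ->
  Lc K x0 x1 m FY FX GY GX GYX pcG sX sY ∘ Lci K x0 x1 m FY FX GY GX GYX q2i rX rY = idm _.
Proof.
  intros H1 H2 H3. unfold Lc, Lci. rewrite !cmp_assoc.
  rewrite (cancel_r _ _ _ (asc_inv1 _ _ _ _ _ _ _ _)).
  rewrite (cancel_r _ _ _ (hc2_inv_l _ _ _ _ _ _ _ _ _ H3)).
  rewrite (cancel_r _ _ _ (asc_inv2 _ _ _ _ _ _ _ _)).
  rewrite (cancel_r _ _ _ (hc2_inv_r _ _ _ _ _ _ _ _ _ H2)).
  rewrite (cancel_r _ _ _ (asc_inv1 _ _ _ _ _ _ _ _)).
  apply hc2_inv_l; exact H1.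
Qed.

Lemma Lc_inv2 K x0 x1 m FY FX GY GX GYX pcG q2i sX sY rX rY :
  q2i ∘ pcG = idm _ -> rX ∘ sX = idm _ -> rY ∘ sY = idm _ ->
  Lci K x0 x1 m FY FX GY GX GYX q2i rX rY ∘ Lc K x0 x1 m FY FX GY GX GYX pcG sX sY = idm _.
Proof.
  intros H1 H2 H3. unfold Lc, Lci. rewrite !cmp_assoc.
  rewrite (cancel_r _ _ _ (hc2_inv_l _ _ _ _ _ _ _ _ _ H1)).
  rewrite (cancel_r _ _ _ (asc_inv2 _ _ _ _ _ _ _ _)).
  rewrite (cancel_r _ _ _ (hc2_inv_r _ _ _ _ _ _ _ _ _ H2)).
  rewrite (cancel_r _ _ _ (asc_inv1 _ _ _ _ _ _ _ _)).
  rewrite (cancel_r _ _ _ (hc2_inv_l _ _ _ _ _ _ _ _ _ H3)).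
  apply asc_inv2.
Qed.

Definition Uc (K : Bicategory) x0 x1 (m : B1 K x0 x1) (FI : B1 K x0 x0) (GI : B1 K x1 x1)
  (puG : hom (bid K x1) GI) := hc2 K puG (idm m) ∘ lui K m ∘ ru K m.
Definition Uci (K : Bicategory) x0 x1 (m : B1 K x0 x1) (FI : B1 K x0 x0) (GI : B1 K x1 x1)
  (q0i : hom GI (bid K x1)) := rui K m ∘ lu K m ∘ hc2 K q0i (idm m).

Lemma Uc_inv1 K x0 x1 m FI GI puG q0i : puG ∘ q0i = idm _ ->
  Uc K x0 x1 m FI GI puG ∘ Uci K x0 x1 m FI GI q0i = idm _.
Proof.
  intros H. unfold Uc, Uci. rewrite !cmp_assoc.
  rewrite (cancel_r _ _ _ (ru_inv2 _ _ _ _)).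
  rewrite (cancel_r _ _ _ (lu_inv1 _ _ _ _)).
  apply hc2_inv_l; exact H.
Qed.
Lemma Uc_inv2 K x0 x1 m FI GI puG q0i : q0i ∘ puG = idm _ ->
  Uci K x0 x1 m FI GI q0i ∘ Uc K x0 x1 m FI GI puG = idm _.
Proof.
  intros H. unfold Uc, Uci. rewrite !cmp_assoc.
  rewrite (cancel_r _ _ _ (hc2_inv_l _ _ _ _ _ _ _ _ _ H)).
  rewrite (cancel_r _ _ _ (lu_inv2 _ _ _ _)).
  apply ru_inv1.
Qed.

Record GD := {
  gC : MonoidalCategory; gK : Bicategory; gF : Pseudofunctor (Del gC) gK; gG : Pseudofunctor (Del gC) gK;
  p2i : forall a b, hom (fob (mf _ _ (homMon gF)) (tens gC a b)) (hc gK (fob (mf _ _ (homMon gF)) a) (fob (mf _ _ (homMon gF)) b));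
  p0i : hom (fob (mf _ _ (homMon gF)) (munit gC)) (bid gK (pob gF tt));
  q2i : forall a b, hom (fob (mf _ _ (homMon gG)) (tens gC a b)) (hc gK (fob (mf _ _ (homMon gG)) a) (fob (mf _ _ (homMon gG)) b));
  q0i : hom (fob (mf _ _ (homMon gG)) (munit gC)) (bid gK (pob gG tt));
  Hp2l : forall a b, mf2 _ _ (homMon gF) a b ∘ p2i a b = idm _;
  Hp2r : forall a b, p2i a b ∘ mf2 _ _ (homMon gF) a b = idm _;
  Hp0l : mf0 _ _ (homMon gF) ∘ p0i = idm _;
  Hp0r : p0i ∘ mf0 _ _ (homMon gF) = idm _;
  Hq2l : forall a b, mf2 _ _ (homMon gG) a b ∘ q2i a b = idm _;
  Hq2r : forall a b, q2i a b ∘ mf2 _ _ (homMon gG) a b = idm _;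
  Hq0l : mf0 _ _ (homMon gG) ∘ q0i = idm _;
  Hq0r : q0i ∘ mf0 _ _ (homMon gG) = idm _ }.

Definition gD (g : GD) := DD (gC g) (gK g) (gF g) (gG g) (p2i g) (p0i g) (q2i g) (q0i g).

Definition tcOf (g : GD) (m : B1 (gK g) (pob (gF g) tt) (pob (gG g) tt)) :
  forall x : unit, B1 (gK g) (pob (gF g) x) (pob (gG g) x) :=
  fun x => match x as x' return B1 (gK g) (pob (gF g) x') (pob (gG g) x') with tt => m end.

Definition tnOf (g : GD) (m : B1 (gK g) (pob (gF g) tt) (pob (gG g) tt))
  (s : forall f : mC (gC g), hom (hc (gK g) m (pf (gF g) (x:=tt) (y:=tt) f))
                                 (hc (gK g) (pf (gG g) (x:=tt) (y:=tt) f) m)) :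
  forall x y (f : B1 (Del (gC g)) x y),
    hom (hc (gK g) (tcOf g m y) (pf (gF g) f)) (hc (gK g) (pf (gG g) f) (tcOf g m x)) :=
  fun x y => match x as x', y as y' return forall f : B1 (Del (gC g)) x' y',
    hom (hc (gK g) (tcOf g m y') (pf (gF g) f)) (hc (gK g) (pf (gG g) f) (tcOf g m x')) with
  | tt, tt => s end.

Definition PN_of_ZL (g : GD) (s : ZLob (gC g) (gD g)) : PseudoNat (gF g) (gG g).
Proof.
  refine (@Build_PseudoNat (Del (gC g)) (gK g) (gF g) (gG g) (tcOf g (zl_m s)) (tnOf g (zl_m s) (zl_s s)) _ _ _ _).
  - intros [] [] f. exact (zl_iso _ _ s f).
  - intros [] [] f f' a. exact (eq_sym (zl_nat _ _ s f f' a)).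
  - intros [] [] [] Y X. simpl.
    refine (proj2 (flipA _ _ (hc2 (gK g) (idm (zl_m s)) (p2i g Y X)) _ _ _) _).
    + apply hc2_inv_r; exact (Hp2l g Y X).
    + apply hc2_inv_r; exact (Hp2r g Y X).
    + rewrite (zl_tens _ _ s X Y). simpl. rewrite !fmor_id, !cmp_assoc. reflexivity.
  - intros []. simpl.
    refine (proj2 (flipA _ _ (hc2 (gK g) (idm (zl_m s)) (p0i g)) _ _ _) _).
    + apply hc2_inv_r; exact (Hp0l g).
    + apply hc2_inv_r; exact (Hp0r g).
    + rewrite (zl_unit _ _ s). simpl. rewrite !cmp_assoc. reflexivity.
Defined.

Definition ZL_of_PN (g : GD) (χ : PseudoNat (gF g) (gG g)) : ZLob (gC g) (gD g).
Proof.
  refine (Build_ZLob (gC g) (gD g) (tc χ tt) (fun X => tn χ (x:=tt) (y:=tt) X) _ _ _ _).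
  - intro X. exact (tn_iso _ _ χ tt tt X).
  - intros X X' f. exact (eq_sym (tn_nat _ _ χ tt tt X X' f)).
  - intros X Y. simpl.
    pose proof (tn_comp _ _ χ tt tt tt Y X) as H. simpl in H.
    rewrite !fmor_id, !cmp_assoc.
    refine (proj1 (flipA _ _ (hc2 (gK g) (idm (tc χ tt)) (p2i g Y X)) _ _ _) H).
    + apply hc2_inv_r; exact (Hp2l g Y X).
    + apply hc2_inv_r; exact (Hp2r g Y X).
  - simpl.
    pose proof (tn_unit _ _ χ tt) as H. simpl in H.
    rewrite !cmp_assoc.
    refine (proj1 (flipA _ _ (hc2 (gK g) (idm (tc χ tt)) (p0i g)) _ _ _) H).
    + apply hc2_inv_r; exact (Hp0l g).
    + apply hc2_inv_r; exact (Hp0r g).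
Defined.


Lemma functor_eq {A B : Category} (F1 F2 : Functor A B) :
  (forall a, fob F1 a = fob F2 a) ->
  (forall a b (f : hom a b), JMeq (fmor F1 f) (fmor F2 f)) -> F1 = F2.
Proof.
  destruct F1 as [o1 m1 i1 c1], F2 as [o2 m2 i2 c2]; simpl; intros Ho Hm.
  assert (o1 = o2) by (apply functional_extensionality; exact Ho). subst o2.
  assert (m1 = m2).
  { apply functional_extensionality_dep; intro a; apply functional_extensionality_dep; intro b;
    apply functional_extensionality_dep; intro f; apply JMeq_eq; apply Hm. }
  subst m2. f_equal; apply proof_irrelevance.
Qed.

Definition FZPm (g : GD) (s t : ZLob (gC g) (gD g)) (f : hom (zl_m s) (zl_m t)) :
  forall x, hom (tcOf g (zl_m s) x) (tcOf g (zl_m t) x) :=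
  fun x => match x as x' return hom (tcOf g (zl_m s) x') (tcOf g (zl_m t) x') with tt => f end.

Lemma FZPm_ok (g : GD) (s t : ZL (gC g) (gD g)) (f : hom s t) :
  is_modif (PN_of_ZL g s) (PN_of_ZL g t) (FZPm g s t (proj1_sig f)).
Proof.
  intros [] [] X. simpl. pose proof (proj2_sig f X) as H. simpl in H.
  rewrite !fmor_id in H. exact (eq_sym H).
Qed.

Definition FZP (g : GD) : Functor (ZL (gC g) (gD g)) (Pseudo (gF g) (gG g)).
Proof.
  refine (Build_Functor (ZL (gC g) (gD g)) (Pseudo (gF g) (gG g)) (PN_of_ZL g)
    (fun s t f => exist _ (FZPm g s t (proj1_sig f)) (FZPm_ok g s t f)) _ _).
  - intros s. apply sig_eq; simpl. apply functional_extensionality_dep; intros []; reflexivity.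
  - intros s t u f1 f2. apply sig_eq; simpl. apply functional_extensionality_dep; intros []; reflexivity.
Defined.

Lemma FPZm_ok (g : GD) (χ ψ : Pseudo (gF g) (gG g)) (m : hom χ ψ) :
  is_zl_mor (ZL_of_PN g χ) (ZL_of_PN g ψ) (proj1_sig m tt).
Proof.
  intros X. simpl. pose proof (proj2_sig m tt tt X) as H. simpl in H.
  rewrite !fmor_id. exact (eq_sym H).
Qed.

Definition FPZ (g : GD) : Functor (Pseudo (gF g) (gG g)) (ZL (gC g) (gD g)).
Proof.
  refine (Build_Functor (Pseudo (gF g) (gG g)) (ZL (gC g) (gD g)) (ZL_of_PN g)
    (fun χ ψ m => exist _ (proj1_sig m tt) (FPZm_ok g χ ψ m)) _ _).
  - intros s. apply sig_eq; reflexivity.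
  - intros s t u f1 f2. apply sig_eq; reflexivity.
Defined.

Lemma zl_eq C D (s t : ZLob C D) : zl_m s = zl_m t -> JMeq (zl_s s) (zl_s t) -> s = t.
Proof.
  destruct s as [m1 s1 a1 b1 c1 d1], t as [m2 s2 a2 b2 c2 d2]; simpl; intros Hm Hs.
  subst m2. apply JMeq_eq in Hs. subst s2. f_equal; apply proof_irrelevance.
Qed.

Lemma ZL_rt (g : GD) (s : ZLob (gC g) (gD g)) : ZL_of_PN g (PN_of_ZL g s) = s.
Proof.
  apply zl_eq; reflexivity.
Qed.

Lemma pn_eq {B K} {P Q : Pseudofunctor B K} (χ1 χ2 : PseudoNat P Q) :
  tc χ1 = tc χ2 -> (forall x y (f : B1 B x y), JMeq (tn χ1 f) (tn χ2 f)) -> χ1 = χ2.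
Proof.
  destruct χ1 as [t1 n1 a1 b1 c1 d1], χ2 as [t2 n2 a2 b2 c2 d2]; simpl; intros Ht Hn.
  subst t2.
  assert (n1 = n2).
  { apply functional_extensionality_dep; intro a; apply functional_extensionality_dep; intro b;
    apply functional_extensionality_dep; intro f; apply JMeq_eq; apply Hn. }
  subst n2. f_equal; apply proof_irrelevance.
Qed.

Lemma PN_rt (g : GD) (χ : PseudoNat (gF g) (gG g)) : PN_of_ZL g (ZL_of_PN g χ) = χ.
Proof.
  apply pn_eq.
  - apply functional_extensionality_dep; intros []; reflexivity.
  - intros [] [] f; reflexivity.
Qed.

Lemma ZL_hom_JMeq C D (s s' t t' : ZL C D) (f : hom s t) (f' : hom s' t') :
  s = s' -> t = t' -> JMeq (proj1_sig f) (proj1_sig f') -> JMeq f f'.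
Proof.
  intros -> ->. intro H. apply JMeq_eq in H. apply sig_eq in H. rewrite H. reflexivity.
Qed.

Lemma PS_hom_JMeq {B K} (P Q : Pseudofunctor B K) (s s' t t' : Pseudo P Q) (f : hom s t) (f' : hom s' t') :
  s = s' -> t = t' -> (forall x, JMeq (proj1_sig f x) (proj1_sig f' x)) -> JMeq f f'.
Proof.
  intros -> ->. intro H.
  assert (proj1_sig f = proj1_sig f').
  { apply functional_extensionality_dep; intro x; apply JMeq_eq; apply H. }
  apply sig_eq in H0. rewrite H0. reflexivity.
Qed.

Lemma isoZP (g : GD) : CatIso (ZL (gC g) (gD g)) (Pseudo (gF g) (gG g)).
Proof.
  exists (FZP g), (FPZ g). split; apply functor_eq.
  - intro s. apply ZL_rt.
  - intros s t f. apply ZL_hom_JMeq; [apply ZL_rt | apply ZL_rt | reflexivity].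
  - intro χ. apply PN_rt.
  - intros χ ψ m. apply PS_hom_JMeq; [apply PN_rt | apply PN_rt |].
    intros []. reflexivity.
Qed.

Definition inv {Cat : Category} {a b : ob Cat} (f : hom a b) (H : is_iso f) : hom b a :=
  proj1_sig (constructive_indefinite_description _ H).

Lemma inv_l {Cat : Category} {a b : ob Cat} (f : hom a b) (H : is_iso f) : inv f H ∘ f = idm _.
Proof. unfold inv. destruct (constructive_indefinite_description _ H) as [g [H1 H2]]. exact H1. Qed.
Lemma inv_r {Cat : Category} {a b : ob Cat} (f : hom a b) (H : is_iso f) : f ∘ inv f H = idm _.
Proof. unfold inv. destruct (constructive_indefinite_description _ H) as [g [H1 H2]]. exact H2. Qed.
Lemma inv_unique {Cat : Category} {a b : ob Cat} (f : hom a b) (H : is_iso f) (g : hom b a) :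
  g ∘ f = idm _ -> inv f H = g.
Proof.
  intro Hg. rewrite <- (cmp_idl (inv f H)), <- Hg, <- cmp_assoc, inv_r, cmp_idr. reflexivity.
Qed.
Lemma inv_is_iso {Cat : Category} {a b : ob Cat} (f : hom a b) (H : is_iso f) : is_iso (inv f H).
Proof. exists f. split; [apply inv_r | apply inv_l]. Qed.
Lemma inv_inv {Cat : Category} {a b : ob Cat} (f : hom a b) (H : is_iso f) H' : inv (inv f H) H' = f.
Proof. apply inv_unique. apply inv_r. Qed.

Lemma conj_inv {Cat : Category} {x y x' y' : ob Cat} (a : hom x y) (b : hom x' y') (u : hom x x') (v : hom y y')
  (Ha : is_iso a) (Hb : is_iso b) : b ∘ u = v ∘ a -> u ∘ inv a Ha = inv b Hb ∘ v.
Proof.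
  intro H. transitivity (inv b Hb ∘ (b ∘ u) ∘ inv a Ha).
  { rewrite (cmp_assoc (inv b Hb) b u), inv_l, cmp_idl. reflexivity. }
  rewrite H, (cmp_assoc (inv b Hb) v a), <- (cmp_assoc (inv b Hb ∘ v) a), inv_r, cmp_idr. reflexivity.
Qed.

Lemma tens_flip (K : Bicategory) x0 x1 (m : B1 K x0 x1) (FY FX FYX : B1 K x0 x0) (GY GX GYX : B1 K x1 x1)
  (pcF : hom (hc K FY FX) FYX) (p2i : hom FYX (hc K FY FX)) (pcG : hom (hc K GY GX) GYX) (q2i : hom GYX (hc K GY GX))
  sX sY (sYX : hom (hc K m FYX) (hc K GYX m)) rX rY rYX :
  pcF ∘ p2i = idm _ -> p2i ∘ pcF = idm _ -> pcG ∘ q2i = idm _ -> q2i ∘ pcG = idm _ ->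
  sX ∘ rX = idm _ -> rX ∘ sX = idm _ -> sY ∘ rY = idm _ -> rY ∘ sY = idm _ ->
  sYX ∘ rYX = idm _ -> rYX ∘ sYX = idm _ ->
  (sYX ∘ hc2 K (idm m) pcF = Lc K x0 x1 m FY FX GY GX GYX pcG sX sY <->
   rYX = hc2 K (idm m) pcF ∘ asc K m FY FX ∘ hc2 K rY (idm FX) ∘ asci K GY m FX ∘ hc2 K (idm GY) rX
         ∘ asc K GY GX m ∘ hc2 K q2i (idm m)).
Proof.
  intros. rewrite (flipB sYX rYX (hc2 K (idm m) pcF) (hc2 K (idm m) p2i) _ (Lci K x0 x1 m FY FX GY GX GYX q2i rX rY)).
  - unfold Lci. rewrite !cmp_assoc. reflexivity.
  - assumption.
  - assumption.
  - apply hc2_inv_r; assumption.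
  - apply hc2_inv_r; assumption.
  - apply Lc_inv1; assumption.
  - apply Lc_inv2; assumption.
Qed.

Lemma unit_flip (K : Bicategory) x0 x1 (m : B1 K x0 x1) (FI : B1 K x0 x0) (GI : B1 K x1 x1)
  (puF : hom (bid K x0) FI) (p0i : hom FI (bid K x0)) (puG : hom (bid K x1) GI) (q0i : hom GI (bid K x1))
  (sI : hom (hc K m FI) (hc K GI m)) rI :
  puF ∘ p0i = idm _ -> p0i ∘ puF = idm _ -> puG ∘ q0i = idm _ -> q0i ∘ puG = idm _ ->
  sI ∘ rI = idm _ -> rI ∘ sI = idm _ ->
  (sI ∘ hc2 K (idm m) puF = hc2 K puG (idm m) ∘ lui K m ∘ ru K m <->
   rI = hc2 K (idm m) puF ∘ rui K m ∘ lu K m ∘ hc2 K q0i (idm m)).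
Proof.
  intros. rewrite (flipB sI rI (hc2 K (idm m) puF) (hc2 K (idm m) p0i) (Uc K x0 x1 m FI GI puG) (Uci K x0 x1 m FI GI q0i)).
  - unfold Uci. rewrite !cmp_assoc. reflexivity.
  - assumption.
  - assumption.
  - apply hc2_inv_r; assumption.
  - apply hc2_inv_r; assumption.
  - apply Uc_inv1; assumption.
  - apply Uc_inv2; assumption.
Qed.

Definition ZR_of_PN (g : GD) (χ : PseudoNat (gF g) (gG g)) : ZRob (gC g) (gD g).
Proof.
  refine (Build_ZRob (gC g) (gD g) (tc χ tt)
            (fun X => inv (tn χ (x:=tt) (y:=tt) X) (tn_iso _ _ χ tt tt X)) _ _ _ _).
  - intro X. apply inv_is_iso.
  - intros X X' f. simpl. apply conj_inv. exact (tn_nat _ _ χ tt tt X X' f).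
  - intros X Y. simpl. rewrite !fmor_id, !cmp_assoc.
    pose proof (tn_comp _ _ χ tt tt tt Y X) as H. simpl in H.
    refine (proj1 (tens_flip _ _ _ _ _ _ _ _ _ _ _ (p2i g Y X) _ (q2i g Y X) _ _ _ _ _ _
                    _ _ _ _ _ _ _ _ _ _) H).
    all: first [ exact (Hp2l g Y X) | exact (Hp2r g Y X) | exact (Hq2l g Y X) | exact (Hq2r g Y X)
               | apply inv_r | apply inv_l ].
  - simpl. rewrite !cmp_assoc.
    pose proof (tn_unit _ _ χ tt) as H. simpl in H.
    refine (proj1 (unit_flip _ _ _ _ _ _ _ (p0i g) _ (q0i g) _ _ _ _ _ _ _ _) H).
    all: first [ exact (Hp0l g) | exact (Hp0r g) | exact (Hq0l g) | exact (Hq0r g)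
               | apply inv_r | apply inv_l ].
Defined.

Definition PN_of_ZR (g : GD) (s : ZRob (gC g) (gD g)) : PseudoNat (gF g) (gG g).
Proof.
  refine (@Build_PseudoNat (Del (gC g)) (gK g) (gF g) (gG g) (tcOf g (zr_m s))
     (tnOf g (zr_m s) (fun X => inv (zr_s s X) (zr_iso _ _ s X))) _ _ _ _).
  - intros [] [] f. apply inv_is_iso.
  - intros [] [] f f' a. simpl. symmetry. apply conj_inv. exact (eq_sym (zr_nat _ _ s f f' a)).
  - intros [] [] [] Y X. simpl.
    pose proof (zr_tens _ _ s X Y) as H. simpl in H. rewrite !fmor_id, !cmp_assoc in H.
    refine (proj2 (tens_flip _ _ _ _ _ _ _ _ _ _ _ (p2i g Y X) _ (q2i g Y X) _ _ _ _ _ _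
                    _ _ _ _ _ _ _ _ _ _) H).
    all: first [ exact (Hp2l g Y X) | exact (Hp2r g Y X) | exact (Hq2l g Y X) | exact (Hq2r g Y X)
               | apply inv_r | apply inv_l ].
  - intros []. simpl.
    pose proof (zr_unit _ _ s) as H. simpl in H. rewrite !cmp_assoc in H.
    refine (proj2 (unit_flip _ _ _ _ _ _ _ (p0i g) _ (q0i g) _ _ _ _ _ _ _ _) H).
    all: first [ exact (Hp0l g) | exact (Hp0r g) | exact (Hq0l g) | exact (Hq0r g)
               | apply inv_r | apply inv_l ].
Defined.

Lemma FPRm_ok (g : GD) (χ ψ : Pseudo (gF g) (gG g)) (m : hom χ ψ) :
  is_zr_mor (ZR_of_PN g χ) (ZR_of_PN g ψ) (proj1_sig m tt).
Proof.
  intros X. simpl. pose proof (proj2_sig m tt tt X) as H. simpl in H.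
  rewrite !fmor_id. apply conj_inv. exact H.
Qed.

Definition FPR (g : GD) : Functor (Pseudo (gF g) (gG g)) (ZR (gC g) (gD g)).
Proof.
  refine (Build_Functor (Pseudo (gF g) (gG g)) (ZR (gC g) (gD g)) (ZR_of_PN g)
    (fun χ ψ m => exist _ (proj1_sig m tt) (FPRm_ok g χ ψ m)) _ _).
  - intros s. apply sig_eq; reflexivity.
  - intros s t u f1 f2. apply sig_eq; reflexivity.
Defined.

Definition FRPm (g : GD) (s t : ZRob (gC g) (gD g)) (f : hom (zr_m s) (zr_m t)) :
  forall x, hom (tcOf g (zr_m s) x) (tcOf g (zr_m t) x) :=
  fun x => match x as x' return hom (tcOf g (zr_m s) x') (tcOf g (zr_m t) x') with tt => f end.

Lemma FRPm_ok (g : GD) (s t : ZR (gC g) (gD g)) (f : hom s t) :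
  is_modif (PN_of_ZR g s) (PN_of_ZR g t) (FRPm g s t (proj1_sig f)).
Proof.
  intros [] [] X. simpl. pose proof (proj2_sig f X) as H. simpl in H.
  rewrite !fmor_id in H. symmetry. apply conj_inv. exact (eq_sym H).
Qed.

Definition FRP (g : GD) : Functor (ZR (gC g) (gD g)) (Pseudo (gF g) (gG g)).
Proof.
  refine (Build_Functor (ZR (gC g) (gD g)) (Pseudo (gF g) (gG g)) (PN_of_ZR g)
    (fun s t f => exist _ (FRPm g s t (proj1_sig f)) (FRPm_ok g s t f)) _ _).
  - intros s. apply sig_eq; simpl. apply functional_extensionality_dep; intros []; reflexivity.
  - intros s t u f1 f2. apply sig_eq; simpl. apply functional_extensionality_dep; intros []; reflexivity.
Defined.

Lemma zr_eq C D (s t : ZRob C D) : zr_m s = zr_m t -> JMeq (zr_s s) (zr_s t) -> s = t.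
Proof.
  destruct s as [m1 s1 a1 b1 c1 d1], t as [m2 s2 a2 b2 c2 d2]; simpl; intros Hm Hs.
  subst m2. apply JMeq_eq in Hs. subst s2. f_equal; apply proof_irrelevance.
Qed.

Lemma ZR_rt (g : GD) (s : ZRob (gC g) (gD g)) : ZR_of_PN g (PN_of_ZR g s) = s.
Proof.
  apply zr_eq; [reflexivity|]. simpl.
  assert (E : (fun X => inv (inv (zr_s s X) (zr_iso _ _ s X)) (tn_iso _ _ (PN_of_ZR g s) tt tt X)) = zr_s s).
  { apply functional_extensionality_dep; intro X. apply inv_inv. }
  rewrite <- E. reflexivity.
Qed.

Lemma PN_rt2 (g : GD) (χ : PseudoNat (gF g) (gG g)) : PN_of_ZR g (ZR_of_PN g χ) = χ.
Proof.
  apply pn_eq.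
  - apply functional_extensionality_dep; intros []; reflexivity.
  - intros [] [] f. simpl. rewrite inv_inv. reflexivity.
Qed.

Lemma ZR_hom_JMeq C D (s s' t t' : ZR C D) (f : hom s t) (f' : hom s' t') :
  s = s' -> t = t' -> JMeq (proj1_sig f) (proj1_sig f') -> JMeq f f'.
Proof.
  intros -> ->. intro H. apply JMeq_eq in H. apply sig_eq in H. rewrite H. reflexivity.
Qed.

Lemma isoPR (g : GD) : CatIso (Pseudo (gF g) (gG g)) (ZR (gC g) (gD g)).
Proof.
  exists (FPR g), (FRP g). split; apply functor_eq.
  - intro χ. apply PN_rt2.
  - intros χ ψ m. apply PS_hom_JMeq; [apply PN_rt2 | apply PN_rt2 |].
    intros []. reflexivity.
  - intro s. apply ZR_rt.
  - intros s t f. apply ZR_hom_JMeq; [apply ZR_rt | apply ZR_rt | reflexivity].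
Qed.
Theorem generic (C : MonoidalCategory) (K : Bicategory) (F G : Pseudofunctor (Del C) K)
  (p2i : forall a b, hom (fob (mf _ _ (homMon F)) (tens C a b)) (hc K (fob (mf _ _ (homMon F)) a) (fob (mf _ _ (homMon F)) b)))
  (p0i : hom (fob (mf _ _ (homMon F)) (munit C)) (bid K (pob F tt)))
  (q2i : forall a b, hom (fob (mf _ _ (homMon G)) (tens C a b)) (hc K (fob (mf _ _ (homMon G)) a) (fob (mf _ _ (homMon G)) b)))
  (q0i : hom (fob (mf _ _ (homMon G)) (munit C)) (bid K (pob G tt)))
  (Hp2l : forall a b, mf2 _ _ (homMon F) a b ∘ p2i a b = idm _)
  (Hp2r : forall a b, p2i a b ∘ mf2 _ _ (homMon F) a b = idm _)
  (Hp0l : mf0 _ _ (homMon F) ∘ p0i = idm _)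
  (Hp0r : p0i ∘ mf0 _ _ (homMon F) = idm _)
  (Hq2l : forall a b, mf2 _ _ (homMon G) a b ∘ q2i a b = idm _)
  (Hq2r : forall a b, q2i a b ∘ mf2 _ _ (homMon G) a b = idm _)
  (Hq0l : mf0 _ _ (homMon G) ∘ q0i = idm _)
  (Hq0r : q0i ∘ mf0 _ _ (homMon G) = idm _) :
  CatIso (ZL C (DD C K F G p2i p0i q2i q0i)) (Pseudo F G) /\
  CatIso (Pseudo F G) (ZR C (DD C K F G p2i p0i q2i q0i)).
Proof.
  pose (g := Build_GD C K F G p2i p0i q2i q0i Hp2l Hp2r Hp0l Hp0r Hq2l Hq2r Hq0l Hq0r).
  exact (conj (isoZP g) (isoPR g)).
Qed.

Theorem corollary3p8 (C : MonoidalCategory) (K : Bicategory) (o0 o1 : B0 K)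
  (Hdist : o0 <> o1)
  (e0 : End K o0 = C) (e1 : End K o1 = C)
  (F G : Pseudofunctor (Del C) K)
  (HFob : pob F tt = o0) (HGob : pob G tt = o1)
  (HFid : homMonAt F o0 HFob = castIdMon K o0 C e0)
  (HGid : homMonAt G o1 HGob = castIdMon K o1 C e1) :
  CatIso (ZL C (bimodC K o0 o1 C e0 e1)) (Pseudo F G) /\
  CatIso (Pseudo F G) (ZR C (bimodC K o0 o1 C e0 e1)).
Proof.
  subst o0 o1.
  assert (HB : bimodC K (pob F tt) (pob G tt) C e0 e1 =
    bimodL C C K (pob G tt) (castIdMon K _ C e1) (ci2 K _ C e1) (ci0 K _ C e1)
      (bimodR C K (pob F tt) (pob G tt) (castIdMon K _ C e0) (ci2 K _ C e0) (ci0 K _ C e0))).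
  { unfold bimodC. rewrite castL. rewrite castR. reflexivity. }
  rewrite HB.
  generalize (ci2_l K _ C e0) (ci2_r K _ C e0) (ci0_l K _ C e0) (ci0_r K _ C e0)
    (ci2_l K _ C e1) (ci2_r K _ C e1) (ci0_l K _ C e1) (ci0_r K _ C e1).
  generalize (ci2 K _ C e0) (ci0 K _ C e0) (ci2 K _ C e1) (ci0 K _ C e1).
  rewrite <- HFid, <- HGid.
  intros. exact (generic C K F G _ _ _ _ H H0 H1 H2 H3 H4 H5 H6).
Qed.
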